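(* For every integer $k\ge1$, the number of $1$-factorisations of $GP(3k,k)$ equals $t_k(1)+3h_k(2)$.
   Context: $GP(3k,k)$ has vertex set $\{u_i,v_i : i\in\mathbb{Z}_{3k}\}$ and edges $u_iu_{i+1}$, $u_iv_i$, $v_iv_{i+k}$ for $i\in\mathbb{Z}_{3k}$. A $1$-factorisation is a partition of the edge set into perfect matchings (unordered). Let $T$ be a triangle (cycle of length $3$) and $H$ a cycle of length $6$. For $\ell\ge0$, $t_k(\ell)$ denotes the number of walks of length $k$ from $x$ to $y$ in $T$, where $x,y$ are vertices of $T$ at distance $\ell$, and $h_k(\ell)$ denotes the number of walks of length $k$ from $x$ to $y$ in $H$, where $x,y$ are vertices of $H$ at distance $\ell$ (these numbers depend only on $\ell$). *)

(* Defs.v *)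
From mathcomp Require Import all_boot.
Set Implicit Arguments.
Unset Strict Implicit.
Unset Printing Implicit Defensive.

(* Vertex (false, i) is u_i, vertex (true, i) is v_i, i in Z_{3k}. *)
Definition gp_vertex (k : nat) := (bool * 'I_(3 * k))%type.

Definition gp_adj (k : nat) (x y : gp_vertex k) : bool :=
  let n := 3 * k in
  match x, y with
  | (false, i), (false, j) => (j == (i + 1) %% n :> nat) || (i == (j + 1) %% n :> nat)
  | (true, i), (true, j) => (j == (i + k) %% n :> nat) || (i == (j + k) %% n :> nat)
  | (false, i), (true, j) => i == j
  | (true, i), (false, j) => i == j
  end.

Definition gp_edges (k : nat) : {set {set gp_vertex k}} :=
  [set e : {set gp_vertex k} | [exists x, exists y, (e == [set x; y]) && gp_adj x y]].

Definition perfect_matching (k : nat) (M : {set {set gp_vertex k}}) : bool :=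
  (M \subset gp_edges k) &&
  [forall v : gp_vertex k, #|[set e in M | v \in e]| == 1].

Definition one_factorisation (k : nat) (F : {set {set {set gp_vertex k}}}) : bool :=
  partition F (gp_edges k) && [forall M in F, perfect_matching M].

Definition num_one_factorisations (k : nat) : nat :=
  #|[set F : {set {set {set gp_vertex k}}} | one_factorisation F]|.

Definition cyc_adj (n : nat) (i j : 'I_n) : bool :=
  (j == (i + 1) %% n :> nat) || (i == (j + 1) %% n :> nat).

Definition cyc_walks (n len : nat) (x y : 'I_n) : nat :=
  #|[set w : {ffun 'I_len.+1 -> 'I_n} |
      [&& w ord0 == x, w ord_max == y &
          [forall t : 'I_len, cyc_adj (w (widen_ord (leqnSn len) t)) (w (lift ord0 t))]]]|.

(* t_k(l): walks of length k in the triangle T = C_3 between vertices at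
   distance l (here vertices 0 and l, l <= 1). *)
Definition t_walks (k l : nat) : nat := cyc_walks k (@inord 2 0) (@inord 2 l).
(* h_k(l): walks of length k in the hexagon H = C_6 between vertices at
   distance l (here vertices 0 and l, l <= 3). *)
Definition h_walks (k l : nat) : nat := cyc_walks k (@inord 5 0) (@inord 5 l).

(* Main.v *)
Require Import Defs.
From mathcomp Require Import all_boot zify.
Set Implicit Arguments. Unset Strict Implicit. Unset Printing Implicit Defensive.

Section Walks.
Variables (T : finType) (r : rel T).

Definition wstep len (w : {ffun 'I_len.+1 -> T}) :=
  [forall t : 'I_len, r (w (widen_ord (leqnSn len) t)) (w (lift ord0 t))].

Definition walkset len x y : {set {ffun 'I_len.+1 -> T}} :=
  [set w : {ffun 'I_len.+1 -> T} | [&& w ord0 == x, w ord_max == y & wstep w]].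

Definition walks len x y := #|walkset len x y|.

Lemma walks0 x y : walks 0 x y = (x == y).
Proof.
rewrite /walks.
case: eqP => [<-|nxy].
  rewrite (_ : walkset 0 x x = [set [ffun _ => x]]) ?cards1 //.
  apply/setP => w; rewrite !inE.
  apply/andP/eqP => [[/eqP w0 /andP[/eqP wm _]]|->]; last first.
    by rewrite !ffunE eqxx /=; split=> //; apply/forallP => [[]].
  by apply/ffunP => i; rewrite ffunE (ord1 i).
apply/eqP; rewrite cards_eq0; apply/eqP/setP => w; rewrite !inE.
apply/negP => /and3P[/eqP w0 /eqP wm _]; apply: nxy.
by rewrite -w0 -wm; congr (w _); apply: val_inj.
Qed.

Definition wext len (x : T) (w : {ffun 'I_len.+1 -> T}) : {ffun 'I_len.+2 -> T} :=
  [ffun i => if unlift ord0 i is Some j then w j else x].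

Definition wtail len (w : {ffun 'I_len.+2 -> T}) : {ffun 'I_len.+1 -> T} :=
  [ffun j => w (lift ord0 j)].

Lemma wtailK len x (w : {ffun 'I_len.+1 -> T}) : wtail (wext x w) = w.
Proof. by apply/ffunP => j; rewrite !ffunE liftK. Qed.

Lemma wextK len x (w : {ffun 'I_len.+2 -> T}) : w ord0 = x -> wext x (wtail w) = w.
Proof.
move=> w0; apply/ffunP => i; rewrite !ffunE.
by case: unliftP => [j ->|->]; rewrite ?ffunE.
Qed.

Lemma walkset_front len x y z :
  [set w in walkset len.+1 x y | w (lift ord0 ord0) == z] =
  if r x z then wext x @: walkset len z y else set0.
Proof.
apply/setP => w; rewrite !inE.
have E1 : forall (t : 'I_len),
   widen_ord (leqnSn len.+1) (lift ord0 t) = lift ord0 (widen_ord (leqnSn len) t).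
  by move=> t; apply: val_inj.
apply/idP/idP.
  case/andP => /and3P[/eqP w0 /eqP wm /forallP st] /eqP w1.
  have rxz : r x z.
    have := st ord0; rewrite -w0 -w1.
    by have -> : widen_ord (leqnSn len.+1) ord0 = ord0 by apply: val_inj.
  rewrite rxz; apply/imsetP; exists (wtail w); last by rewrite wextK.
  rewrite inE !ffunE; apply/and3P; split.
  - by rewrite -w1; apply/eqP; congr (w _); apply: val_inj.
  - by rewrite -wm; apply/eqP; congr (w _); apply: val_inj.
  apply/forallP => t; rewrite !ffunE.
  by have := st (lift ord0 t); rewrite E1.
case: ifP => rxz; last by rewrite inE.
case/imsetP => w' /[!inE] /and3P[/eqP w0 /eqP wm /forallP st] ->.
rewrite !ffunE /= !liftK; apply/andP; split; last by rewrite w0.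
apply/and3P; split.
- by rewrite unlift_none.
- have -> : (@ord_max len.+1) = lift ord0 ord_max by apply: val_inj.
  by rewrite liftK wm.
apply/forallP => t; rewrite !ffunE.
case: (unliftP ord0 t) => [j ->|->].
  by rewrite E1 !liftK; have := st j.
rewrite liftK.
have -> : widen_ord (leqnSn len.+1) ord0 = ord0 by apply: val_inj.
by rewrite unlift_none w0.
Qed.

Lemma card_walkset_front len x y z :
  #|[set w in walkset len.+1 x y | w (lift ord0 ord0) == z]| = r x z * walks len z y.
Proof.
rewrite walkset_front; case: (r x z); last by rewrite cards0.
rewrite mul1n card_imset //.
by move=> w1 w2 /(congr1 (@wtail _)); rewrite !wtailK.
Qed.

Lemma walks_front len x y : walks len.+1 x y = \sum_z r x z * walks len z y.
Proof.
rewrite /walks -sum1_card.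
rewrite (partition_big (fun w : {ffun 'I_len.+2 -> T} => w (lift ord0 ord0)) xpredT) //=.
apply: eq_bigr => z _; rewrite -card_walkset_front -sum1_card.
by apply: eq_bigl => w; rewrite !inE.
Qed.
End Walks.

Lemma sum_ord_iota m (F : nat -> nat) : \sum_(i < m) F i = sumn [seq F i | i <- iota 0 m].
Proof. by rewrite sumnE big_map -(big_mkord xpredT) /index_iota subn0. Qed.

Definition colstep m (rn : nat -> nat -> bool) (v : seq nat) : seq nat :=
  [seq sumn [seq rn a z * nth 0 v z | z <- iota 0 m] | a <- iota 0 m].
Definition col m rn b l := iter l (colstep m rn) [seq nat_of_bool (a == b) | a <- iota 0 m].

Lemma walks_col m (rn : nat -> nat -> bool) l (a b : 'I_m) :
  walks (fun x y : 'I_m => rn x y) l a b = nth 0 (col m rn b l) a.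
Proof.
elim: l a => [|l IH] a.
  rewrite walks0 /col /= (nth_map 0) ?size_iota // nth_iota // add0n.
rewrite walks_front /col iterS -/(col m rn b l) /colstep (nth_map 0) ?size_iota //.
rewrite nth_iota // add0n -sum_ord_iota.
by apply: eq_bigr => z _; rewrite IH.
Qed.

Lemma all_iotaP m (P : nat -> bool) : all P (iota 0 m) -> forall i, i < m -> P i.
Proof. by move=> /allP H i lim; apply: H; rewrite mem_iota. Qed.

Definition c0 (x : nat) := x %/ 9.
Definition c1 (x : nat) := x %/ 3 %% 3.
Definition c2 (x : nat) := x %% 3.
Definition third (a b : nat) := (6 - (a + b)) %% 3.
Definition rsn (x y : nat) : bool :=
  [&& c0 x != c0 y, c1 x != c1 y, c2 x != c2 y,
      third (c0 x) (c0 y) != third (c1 x) (c1 y),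
      third (c1 x) (c1 y) != third (c2 x) (c2 y) &
      third (c0 x) (c0 y) != third (c2 x) (c2 y)].
Definition rotn (x : nat) := 9 * c1 x + 3 * c2 x + c0 x.
Definition rotI (x : 'I_27) : 'I_27 := inord (rotn x).
Definition rs (x y : 'I_27) := rsn x y.

Definition Nf k := \sum_(X0 : 'I_27) \sum_(X1 : 'I_27)
   ((c0 X0 == 2) && (c0 X1 == 1) && rs X0 X1) * walks rs k.-1 X1 (rotI X0).

Definition cycn n (i j : nat) : bool := (j == (i + 1) %% n) || (i == (j + 1) %% n).

Definition Tf k := nth 0 (col 3 (cycn 3) 1 k) 0.
Definition Hf k := nth 0 (col 6 (cycn 6) 2 k) 0.

Definition Nc k := sumn [seq let c := col 27 rsn (rotn X0) k.-1 in sumn [seq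
   ((c0 X0 == 2) && (c0 X1 == 1) && rsn X0 X1) * nth 0 c X1
   | X1 <- iota 0 27] | X0 <- iota 0 27].

Lemma Nf_Nc k : Nf k = Nc k.
Proof.
rewrite /Nf /Nc -sum_ord_iota; apply: eq_bigr => X0 _.
rewrite -sum_ord_iota; apply: eq_bigr => X1 _.
rewrite walks_col /rotI inordK //.
rewrite /rotn /c0 /c1 /c2.
have h1 : X0 %/ 9 < 3 by rewrite ltn_divLR.
have h2 := ltn_pmod (X0 %/ 3) (isT : 0 < 3).
have h3 := ltn_pmod X0 (isT : 0 < 3).
lia.
Qed.

Lemma base_check : all (fun b => let c1 := col 27 rsn b 1 in let c3 := col 27 rsn b 3 in
   let c5 := col 27 rsn b 5 in
   all (fun a => nth 0 c5 a + 4 * nth 0 c1 a == 5 * nth 0 c3 a) (iota 0 27)) (iota 0 27).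
Proof. by vm_compute. Qed.


Lemma rec_step (T : finType) (r : rel T) l :
  (forall a b, walks r (l + 4) a b + 4 * walks r l a b = 5 * walks r (l + 2) a b) ->
  (forall a b, walks r (l.+1 + 4) a b + 4 * walks r l.+1 a b = 5 * walks r (l.+1 + 2) a b).
Proof.
move=> H a b; rewrite !addSn !walks_front.
rewrite !big_distrr -big_split /=; apply: eq_bigr => z _.
by rewrite mulnCA (mulnCA 5) -mulnDr H.
Qed.

Lemma rec_from (T : finType) (r : rel T) l0 :
  (forall a b, walks r (l0 + 4) a b + 4 * walks r l0 a b = 5 * walks r (l0 + 2) a b) ->
  forall l, l0 <= l ->
  (forall a b, walks r (l + 4) a b + 4 * walks r l a b = 5 * walks r (l + 2) a b).
Proof.
move=> H l; elim: l => [|l IH]; first by rewrite leqn0 => /eqP e; move: H; rewrite e.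
rewrite leq_eqVlt => /orP[/eqP <- //|]; rewrite ltnS => /IH.
exact: rec_step.
Qed.

Lemma rs_rec l : 1 <= l -> forall a b,
  walks rs (l + 4) a b + 4 * walks rs l a b = 5 * walks rs (l + 2) a b.
Proof.
apply: rec_from => a b; rewrite /rs !walks_col.
by apply/eqP; apply: (all_iotaP (all_iotaP base_check (ltn_ord b))).
Qed.

Lemma base_cyc3 : all (fun b => let c0 := col 3 (cycn 3) b 0 in let c2 := col 3 (cycn 3) b 2 in
   let c4 := col 3 (cycn 3) b 4 in
   all (fun a => nth 0 c4 a + 4 * nth 0 c0 a == 5 * nth 0 c2 a) (iota 0 3)) (iota 0 3).
Proof. by vm_compute. Qed.
Lemma base_cyc6 : all (fun b => let c0 := col 6 (cycn 6) b 0 in let c2 := col 6 (cycn 6) b 2 in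
   let c4 := col 6 (cycn 6) b 4 in
   all (fun a => nth 0 c4 a + 4 * nth 0 c0 a == 5 * nth 0 c2 a) (iota 0 6)) (iota 0 6).
Proof. by vm_compute. Qed.

Lemma cyc3_rec l a b : let r := (fun x y : 'I_3 => cycn 3 x y) in
  walks r (l + 4) a b + 4 * walks r l a b = 5 * walks r (l + 2) a b.
Proof.
move=> r; move: l (leq0n l) a b; apply: rec_from => a b; rewrite /r !walks_col.
by apply/eqP; apply: (all_iotaP (all_iotaP base_cyc3 (ltn_ord b))).
Qed.
Lemma cyc6_rec l a b : let r := (fun x y : 'I_6 => cycn 6 x y) in
  walks r (l + 4) a b + 4 * walks r l a b = 5 * walks r (l + 2) a b.
Proof.
move=> r; move: l (leq0n l) a b; apply: rec_from => a b; rewrite /r !walks_col.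
by apply/eqP; apply: (all_iotaP (all_iotaP base_cyc6 (ltn_ord b))).
Qed.

Lemma Tf_walks k : Tf k = walks (fun x y : 'I_3 => cycn 3 x y) k (inord 0) (inord 1).
Proof. by rewrite walks_col !inordK. Qed.
Lemma Hf_walks k : Hf k = walks (fun x y : 'I_6 => cycn 6 x y) k (inord 0) (inord 2).
Proof. by rewrite walks_col !inordK. Qed.

Lemma Nf_rec k : Nf (k + 6) + 4 * Nf (k + 2) = 5 * Nf (k + 4).
Proof.
rewrite /Nf !big_distrr -big_split; apply: eq_bigr => X0 _ /=.
rewrite !big_distrr -big_split; apply: eq_bigr => X1 _ /=.
rewrite (mulnCA 4) (mulnCA 5) -mulnDr.
have -> : (k + 6).-1 = (k + 1) + 4 by rewrite addnS /= -addnA.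
have -> : (k + 2).-1 = (k + 1) by rewrite addnS.
have -> : (k + 4).-1 = (k + 1) + 2 by rewrite addnS /= -addnA.
by rewrite rs_rec // addn1.
Qed.

Lemma TH_rec k : Tf (k + 6) + 3 * Hf (k + 6) + 4 * (Tf (k + 2) + 3 * Hf (k + 2)) =
                 5 * (Tf (k + 4) + 3 * Hf (k + 4)).
Proof.
have T := cyc3_rec (k + 2) (inord 0) (inord 1).
have H := cyc6_rec (k + 2) (inord 0) (inord 2).
have e1 : k + 2 + 4 = k + 6 by rewrite -addnA.
have e2 : k + 2 + 2 = k + 4 by rewrite -addnA.
rewrite e1 e2 in T H.
rewrite !Tf_walks !Hf_walks.
lia.
Qed.

Lemma main_count k : 1 <= k -> Nf k = Tf k + 3 * Hf k.
Proof.
elim: k {-2}k (leqnn k) => [|n IH] k kn k1; first by move: kn k1; case: k.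
case: (ltnP k 7) => k7.
  rewrite Nf_Nc.
  by case: k k1 kn k7 => [|[|[|[|[|[|[|k]]]]]]] // _ _ _; vm_compute.
have [j kj] : exists j, k = j + 6 by exists (k - 6); rewrite subnK // ltnW.
subst k.
have := Nf_rec j; have := TH_rec j.
have h2 : Nf (j + 2) = Tf (j + 2) + 3 * Hf (j + 2) by apply: IH; lia.
have h4 : Nf (j + 4) = Tf (j + 4) + 3 * Hf (j + 4) by apply: IH; lia.
lia.
Qed.

Section G.
Variables (V : finType) (E : {set {set V}}) (x0 : V) (a : 'I_3 -> {set V}).
Hypotheses (haE : forall i, a i \in E) (hax : forall i, x0 \in a i)
  (hainj : injective a) (hx0 : forall e, e \in E -> x0 \in e -> exists i, e = a i).

Definition pm (M : {set {set V}}) :=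
  (M \subset E) && [forall v : V, #|[set e in M | v \in e]| == 1].
Definition ofact (F : {set {set {set V}}}) := partition F E && [forall M in F, pm M].

Definition Col : {set {ffun {set V} -> 'I_3}} :=
  [set c : {ffun {set V} -> 'I_3} | [&& [forall e, (e \notin E) ==> (c e == ord0)],
     [forall i, c (a i) == i] &
     [forall v, forall i, #|[set e in E | (v \in e) && (c e == i)]| == 1]]].

Definition cls (c : {ffun {set V} -> 'I_3}) i := [set e in E | c e == i].
Definition Phi c : {set {set {set V}}} := [set cls c i | i : 'I_3].

Lemma card1_two (A : {set {set V}}) e1 e2 : #|A| == 1 -> e1 \in A -> e2 \in A -> e1 = e2.
Proof. by move=> /cards1P[e ->]; rewrite !inE => /eqP -> /eqP ->. Qed.

Lemma Phi_ofact c : c \in Col -> ofact (Phi c).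
Proof.
rewrite inE => /and3P[/forallP c0 /forallP ca /forallP cv].
have aicl i : a i \in cls c i by rewrite inE haE ca.
apply/andP; split.
  apply/and3P; split.
  - apply/eqP/setP => e; apply/bigcupP/idP => [[B /imsetP[i _ ->]]|eE].
      by rewrite inE => /andP[].
    by exists (cls c (c e)); [exact: imset_f | rewrite inE eE /=].
  - apply/trivIsetP => A B /imsetP[i _ ->] /imsetP[j _ ->] nij.
    apply/pred0P => e /=; rewrite !inE.
    apply/negP => /andP[/andP[_ /eqP ei] /andP[_ /eqP ej]].
    by move: nij; rewrite -ei -ej eqxx.
  - apply/imsetP => [[i _]] /setP /(_ (a i)); rewrite aicl inE.
    done.
apply/forallP => M; apply/implyP => /imsetP[i _ ->]; apply/andP; split.
  by apply/subsetP => e; rewrite inE => /andP[].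
apply/forallP => v; have := forallP (cv v) i.
have -> : [set e in cls c i | v \in e] = [set e in E | (v \in e) && (c e == i)].
  by apply/setP => e; rewrite !inE; case: (e \in E); case: (v \in e); case: (c e == i).
done.
Qed.

Lemma Phi_inj : {in Col &, injective Phi}.
Proof.
move=> c c' cC c'C eqP'.
move: (cC) (c'C); rewrite !inE => /and3P[/forallP c0 /forallP ca _] /and3P[/forallP c0' /forallP ca' _].
apply/ffunP => e; case: (boolP (e \in E)) => eE; last first.
  by rewrite (eqP (implyP (c0 e) eE)) (eqP (implyP (c0' e) eE)).
have : cls c (c e) \in Phi c' by rewrite -eqP'; exact: imset_f.
case/imsetP => j _ ecl.
have : a (c e) \in cls c' j by rewrite -ecl inE haE ca.
rewrite inE (eqP (ca' _)) => /andP[_ /eqP ej].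
have : e \in cls c' j by rewrite -ecl inE eE eqxx.
by rewrite inE ej => /andP[_ /eqP].
Qed.

Section Surj.
Variable F : {set {set {set V}}}.
Hypothesis hF : ofact F.

Let part : partition F E. Proof. by case/andP: hF. Qed.
Let pmF : forall M, M \in F -> pm M. Proof. by case/andP: hF => _ /forallP H M MF; exact: implyP (H M) MF. Qed.
Let covE : cover F = E. Proof. by case/and3P: part => /eqP. Qed.
Let triv : trivIset F. Proof. by case/and3P: part. Qed.

Lemma pb_mem e : e \in E -> pblock F e \in F.
Proof. by move=> eE; apply: pblock_mem; rewrite covE. Qed.
Lemma in_pb e : e \in E -> e \in pblock F e.
Proof. by move=> eE; rewrite mem_pblock covE. Qed.

Lemma pb_inj i j : pblock F (a i) = pblock F (a j) -> i = j.
Proof.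
move=> eij; apply: hainj.
have /andP[_ /forallP /(_ x0) H] := pmF (pb_mem (haE i)).
apply: (card1_two H); rewrite inE ?hax andbT //; first exact: in_pb.
by rewrite eij; exact: in_pb.
Qed.

Lemma block_is B : B \in F -> exists i, B = pblock F (a i).
Proof.
move=> BF; have /andP[sBE /forallP /(_ x0) /cards1P[e He]] := pmF BF.
have : e \in [set e in B | x0 \in e] by rewrite He inE.
rewrite inE => /andP[eB xe].
have eE : e \in E by apply: (subsetP sBE).
have [i ei] := hx0 eE xe; exists i.
by rewrite -ei (def_pblock triv BF eB).
Qed.

Definition o1 : 'I_3 := @Ordinal 3 1 isT.
Definition o2 : 'I_3 := @Ordinal 3 2 isT.
Definition cF : {ffun {set V} -> 'I_3} := [ffun e => if e \in E then
  (if pblock F e == pblock F (a ord0) then ord0 else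
   if pblock F e == pblock F (a (o1)) then o1 else o2) else ord0].

Lemma cF_spec e i : e \in E -> (cF e == i) = (pblock F e == pblock F (a i)).
Proof.
move=> eE; have [j ej] := block_is (pb_mem eE).
rewrite ffunE eE ej.
have all3 : forall k : 'I_3, [\/ k = ord0, k = o1 | k = o2].
  by case=> [[|[|[|]]]] //= kl; [constructor 1|constructor 2|constructor 3];
    apply: val_inj.
have q : forall u v : 'I_3, (pblock F (a u) == pblock F (a v)) = (u == v).
  by move=> u v; apply/eqP/eqP => [/pb_inj|->].
rewrite !q.
by case: (all3 j) => ->; case: (all3 i) => ->.
Qed.

Lemma cls_cF i : cls cF i = pblock F (a i).
Proof.
apply/setP => e; rewrite inE.
case: (boolP (e \in E)) => eE /=.
  rewrite cF_spec //; apply/eqP/idP => [<-|ein]; first exact: in_pb.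
  by apply: def_pblock (pb_mem (haE i)) ein.
apply/esym/negP => ein; move/negP: eE; apply.
by rewrite -covE; apply/bigcupP; exists (pblock F (a i)) => //; exact: pb_mem.
Qed.

Lemma cF_Col : cF \in Col.
Proof.
rewrite inE; apply/and3P; split.
- by apply/forallP => e; apply/implyP => eE; rewrite ffunE (negbTE eE).
- by apply/forallP => i; rewrite cF_spec.
apply/forallP => v; apply/forallP => i.
have /andP[_ /forallP /(_ v)] := pmF (pb_mem (haE i)).
rewrite -cls_cF.
have -> : [set e in cls cF i | v \in e] = [set e in E | (v \in e) && (cF e == i)].
  by apply/setP => e; rewrite !inE; case: (e \in E); case: (v \in e); case: (cF e == i).
done.
Qed.

Lemma Phi_cF : Phi cF = F.
Proof.
apply/setP => B; apply/imsetP/idP => [[i _ ->]|BF].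
  by rewrite cls_cF; exact: pb_mem.
by have [i ->] := block_is BF; exists i => //; rewrite cls_cF.
Qed.
End Surj.

Theorem count_ofact : #|[set F | ofact F]| = #|Col|.
Proof.
rewrite -(card_in_imset Phi_inj).
apply: eq_card => F; rewrite inE; apply/idP/imsetP => [hF|[c cC ->]].
  by exists (cF F); [exact: cF_Col | rewrite Phi_cF].
exact: Phi_ofact.
Qed.
End G.

Section GP.
Variable k : nat.
Hypothesis kpos : 0 < k.
Local Notation n := (3 * k).
Local Notation V := (gp_vertex k).

Lemma npos : 0 < n. Proof. lia. Qed.
Definition om (x : nat) : 'I_n := Ordinal (ltn_pmod x npos).
Definition nx (i : 'I_n) := om (i + 1).
Definition pv (i : 'I_n) := om (i + n.-1).
Definition pk (i : 'I_n) := om (i + k).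
Definition mk (i : 'I_n) := om (i + 2 * k).

Lemma mod2 x : x < 2 * n -> x %% n = if x < n then x else x - n.
Proof.
move=> x2; case: ifP => xn; first by rewrite modn_small.
have -> : x = (x - n) + n by lia.
by rewrite modnDr modn_small; lia.
Qed.


Lemma pv_nx i : pv (nx i) = i.
Proof. have hi := ltn_ord i; apply: val_inj => /=; rewrite modnDml mod2; try lia; case: ifP; lia. Qed.
Lemma nx_pv i : nx (pv i) = i.
Proof. have hi := ltn_ord i; apply: val_inj => /=; rewrite modnDml mod2; try lia; case: ifP; lia. Qed.
Lemma mk_pk i : mk (pk i) = i.
Proof. have hi := ltn_ord i; apply: val_inj => /=; rewrite modnDml mod2; try lia; case: ifP; lia. Qed.
Lemma pk_mk i : pk (mk i) = i.
Proof. have hi := ltn_ord i; apply: val_inj => /=; rewrite modnDml mod2; try lia; case: ifP; lia. Qed.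
Lemma pk_pk i : pk (pk i) = mk i.
Proof. have hi := ltn_ord i; apply: val_inj => /=; rewrite modnDml -addnA addnn -mul2n. done. Qed.
Lemma mk_mk i : mk (mk i) = pk i.
Proof.
have hi := ltn_ord i; apply: val_inj => /=; rewrite modnDml.
have -> : i + 2 * k + 2 * k = (i + k) + n by lia.
by rewrite modnDr.
Qed.

Lemma nx_neq i : nx i != i.
Proof. have hi := ltn_ord i; apply/eqP => /(congr1 val) /=; rewrite mod2; try lia; case: ifP; lia. Qed.
Lemma pv_neq i : pv i != i.
Proof. have hi := ltn_ord i; apply/eqP => /(congr1 val) /=; rewrite mod2; try lia; case: ifP; lia. Qed.
Lemma pv_neq_nx i : pv i != nx i.
Proof. have hi := ltn_ord i; apply/eqP => /(congr1 val) /=; rewrite !mod2; try lia; do 2 case: ifP; lia. Qed.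
Lemma nx_nx_neq i : nx (nx i) != i.
Proof. have hi := ltn_ord i; apply/eqP => /(congr1 val) /=; rewrite modnDml mod2; try lia; case: ifP; lia. Qed.
Lemma pk_neq i : pk i != i.
Proof. have hi := ltn_ord i; apply/eqP => /(congr1 val) /=; rewrite mod2; try lia; case: ifP; lia. Qed.
Lemma mk_neq i : mk i != i.
Proof. have hi := ltn_ord i; apply/eqP => /(congr1 val) /=; rewrite mod2; try lia; case: ifP; lia. Qed.
Lemma pk_neq_mk i : pk i != mk i.
Proof. have hi := ltn_ord i; apply/eqP => /(congr1 val) /=; rewrite !mod2; try lia; do 2 case: ifP; lia. Qed.

Lemma eq_nx i j : (i == nx j) = (pv i == j).
Proof. by apply/eqP/eqP => [->|<-]; rewrite ?pv_nx ?nx_pv. Qed.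
Lemma eq_pk i j : (i == pk j) = (mk i == j).
Proof. by apply/eqP/eqP => [->|<-]; rewrite ?mk_pk ?pk_mk. Qed.

Lemma adj_uu i j : @gp_adj k (false, i) (false, j) = (j == nx i) || (j == pv i).
Proof.
rewrite /gp_adj; change ((j == nx i) || (i == nx j) = (j == nx i) || (j == pv i)).
by rewrite (eq_nx i j) (eq_sym (pv i)).
Qed.
Lemma adj_vv i j : @gp_adj k (true, i) (true, j) = (j == pk i) || (j == mk i).
Proof.
rewrite /gp_adj; change ((j == pk i) || (i == pk j) = (j == pk i) || (j == mk i)).
by rewrite (eq_pk i j) (eq_sym (mk i)).
Qed.
Lemma adj_uv i j : @gp_adj k (false, i) (true, j) = (i == j). Proof. by []. Qed.
Lemma adj_vu i j : @gp_adj k (true, i) (false, j) = (i == j). Proof. by []. Qed.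

End GP.

Section GP2.
Variable k : nat.
Hypothesis kpos : 0 < k.
Local Notation n := (3 * k).
Local Notation V := (gp_vertex k).
Local Notation nx := (nx kpos).
Local Notation pv := (pv kpos).
Local Notation pk := (pk kpos).
Local Notation mk := (mk kpos).

Definition K0 : 'I_3 := @Ordinal 3 0 isT.
Definition K1 : 'I_3 := @Ordinal 3 1 isT.
Definition K2 : 'I_3 := @Ordinal 3 2 isT.

Lemma ord3_cases (t : 'I_3) : [\/ t = K0, t = K1 | t = K2].
Proof. by case: t => [[|[|[|]]]] //= p; [constructor 1|constructor 2|constructor 3]; apply: val_inj. Qed.

Definition ed (d : 'I_3 * 'I_n) : {set V} :=
  if d.1 == K0 then [set (false, d.2); (false, nx d.2)]
  else if d.1 == K1 then [set (false, d.2); (true, d.2)]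
  else [set (true, d.2); (true, pk d.2)].

Definition at1 (w : V) : 'I_3 * 'I_n := if w.1 then (K1, w.2) else (K0, pv w.2).
Definition at2 (w : V) : 'I_3 * 'I_n := if w.1 then (K2, w.2) else (K0, w.2).
Definition at3 (w : V) : 'I_3 * 'I_n := if w.1 then (K2, mk w.2) else (K1, w.2).

Lemma nxF i : (nx i == i) = false. Proof. exact: negbTE (nx_neq _ _). Qed.
Lemma nxF' i : (i == nx i) = false. Proof. by rewrite eq_sym nxF. Qed.
Lemma pvF i : (pv i == i) = false. Proof. exact: negbTE (pv_neq _ _). Qed.
Lemma pvF' i : (i == pv i) = false. Proof. by rewrite eq_sym pvF. Qed.
Lemma pvnxF i : (pv i == nx i) = false. Proof. exact: negbTE (pv_neq_nx _ _). Qed.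
Lemma pvnxF' i : (nx i == pv i) = false. Proof. by rewrite eq_sym pvnxF. Qed.
Lemma pkF i : (pk i == i) = false. Proof. exact: negbTE (pk_neq _ _). Qed.
Lemma pkF' i : (i == pk i) = false. Proof. by rewrite eq_sym pkF. Qed.
Lemma mkF i : (mk i == i) = false. Proof. exact: negbTE (mk_neq _ _). Qed.
Lemma mkF' i : (i == mk i) = false. Proof. by rewrite eq_sym mkF. Qed.
Lemma pkmkF i : (pk i == mk i) = false. Proof. exact: negbTE (pk_neq_mk _ _). Qed.
Lemma pkmkF' i : (mk i == pk i) = false. Proof. by rewrite eq_sym pkmkF. Qed.

Ltac simp := rewrite ?pv_nx ?nx_pv ?mk_pk ?pk_mk ?pk_pk ?mk_mk ?eqxx ?nxF ?nxF' ?pvF ?pvF'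
  ?pvnxF ?pvnxF' ?pkF ?pkF' ?mkF ?mkF' ?pkmkF ?pkmkF' /=.

Ltac bsolve := apply/idP/idP; repeat (case/orP); repeat (move/eqP=> ?); subst; simp;
   rewrite ?orbT //.

Lemma mem_ed w d : (w \in ed d) = [|| d == at1 w, d == at2 w | d == at3 w].
Proof.
case: w => [b i]; case: d => [t j].
rewrite /ed /at1 /at2 /at3 /=.
case: (ord3_cases t) => ->; case: b; rewrite !inE !xpair_eqE /= ?eqxx /=.
all: try done.
all: bsolve.
Qed.

Lemma ed_E d : ed d \in gp_edges k.
Proof.
case: d => [t j]; rewrite inE /ed /=.
case: (ord3_cases t) => -> /=.
- by apply/existsP; exists (false, j); apply/existsP; exists (false, nx j); rewrite eqxx adj_uu eqxx.
- by apply/existsP; exists (false, j); apply/existsP; exists (true, j); rewrite eqxx adj_uv eqxx.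
- by apply/existsP; exists (true, j); apply/existsP; exists (true, pk j); rewrite eqxx adj_vv eqxx.
Qed.

Lemma E_ed e : e \in gp_edges k -> exists d, e = ed d.
Proof.
rewrite inE => /existsP[[b i] /existsP[[b' j] /andP[/eqP -> adj]]].
case: b b' adj => [] [].
- rewrite adj_vv => /orP[]/eqP ->; first by exists (K2, i).
  by exists (K2, mk i); rewrite /ed /= pk_mk setUC.
- by rewrite adj_vu => /eqP ->; exists (K1, j); rewrite /ed /= setUC.
- by rewrite adj_uv => /eqP ->; exists (K1, j).
- rewrite adj_uu => /orP[]/eqP ->; first by exists (K0, i).
  by exists (K0, pv i); rewrite /ed /= nx_pv setUC.
Qed.

Lemma ed_inj : injective ed.
Proof.
move=> d1 [t j] e.
have m : forall w, (w \in ed d1) = (w \in ed (t, j)) by move=> w; rewrite e.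
case: (ord3_cases t) => et; subst t;
 [have := m (false, j); have := m (false, nx j) | have := m (false, j); have := m (true, j)
 | have := m (true, j); have := m (true, pk j)];
  rewrite !mem_ed /at1 /at2 /at3 /= !xpair_eqE /=; simp; rewrite ?orbT /=;
  case: d1 {e m} => t' j' /=; rewrite !xpair_eqE /=; case: (ord3_cases t') => -> /=;
    rewrite ?andbF ?orbF //=;
  do 4 (simp; try case/orP; try move/eqP->); by simp.
Qed.

Lemma at_uniq w : [&& at1 w != at2 w, at2 w != at3 w & at1 w != at3 w].
Proof. by case: w => [[] i]; rewrite /at1 /at2 /at3 /= !xpair_eqE /=; simp. Qed.

Lemma mem3 (T : finType) (x a b c : T) : (x \in [set a; b; c]) = [|| x == a, x == b | x == c].
Proof. by rewrite !inE; case: (x == a); case: (x == b). Qed.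

Lemma E_at w : [set e in gp_edges k | w \in e] = [set ed (at1 w); ed (at2 w); ed (at3 w)].
Proof.
apply/setP => e; rewrite {1}in_set mem3; apply/andP/idP => [[eE we]|].
  have [d ed'] := E_ed eE; subst e; move: we; rewrite mem_ed.
  by case/or3P => /eqP ->; rewrite eqxx ?orbT.
by case/or3P => /eqP ->; rewrite ed_E mem_ed eqxx ?orbT.
Qed.

Lemma card3P (T : finType) (x y z : T) (P : pred T) :
  [&& x != y, y != z & x != z] -> #|[set e in [set x; y; z] | P e]| = P x + P y + P z.
Proof.
case/and3P => xy yz xz.
rewrite -sum1_card.
rewrite (eq_bigl (fun e => (e \in [set x; y; z]) && P e)); last by move=> e; rewrite inE.
rewrite big_mkcondr /=. rewrite -setUA big_setU1 /=; last by rewrite !inE negb_or xy xz.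
rewrite big_setU1 /=; last by rewrite !inE yz.
by rewrite big_set1 addnA; case: (P x); case: (P y); case: (P z).
Qed.

Lemma card_at w (P : pred {set V}) :
  #|[set e in gp_edges k | (w \in e) && P e]| = P (ed (at1 w)) + P (ed (at2 w)) + P (ed (at3 w)).
Proof.
rewrite -card3P.
  apply: eq_card => e; rewrite -E_at !in_set; by rewrite andbA.
case/and3P: (at_uniq w) => h1 h2 h3.
by rewrite !(inj_eq ed_inj) h1 h2 h3.
Qed.

Definition dist3 (x y z : 'I_3) := [&& x != y, y != z & x != z].

Lemma col3 (x y z : 'I_3) : [forall i, (x == i) + (y == i) + (z == i) == 1] = dist3 x y z.
Proof.
apply/forallP/idP => [H|d i].
  move: (H K0) (H K1) (H K2).
  by case: (ord3_cases x) => ->; case: (ord3_cases y) => ->; case: (ord3_cases z) => ->.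
move: d; case: (ord3_cases i) => ->;
by case: (ord3_cases x) => ->; case: (ord3_cases y) => ->; case: (ord3_cases z) => ->.
Qed.

Lemma proper_iff (c : {ffun {set V} -> 'I_3}) :
  [forall v, forall i, #|[set e in gp_edges k | (v \in e) && (c e == i)]| == 1] =
  [forall w, dist3 (c (ed (at1 w))) (c (ed (at2 w))) (c (ed (at3 w)))].
Proof.
apply: eq_forallb => w; rewrite -col3; apply: eq_forallb => i.
by rewrite (card_at w (fun e => c e == i)).
Qed.

End GP2.

Section GP3.
Variable k : nat.
Hypothesis kpos : 0 < k.
Local Notation n := (3 * k).
Local Notation V := (gp_vertex k).
Local Notation nx := (nx kpos).
Local Notation pv := (pv kpos).
Local Notation pk := (pk kpos).
Local Notation mk := (mk kpos).
Local Notation ed := (ed kpos).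
Local Notation E := (gp_edges k).
Local Notation at1 := (at1 kpos).
Local Notation at2 := (@at2 k).
Local Notation at3 := (at3 kpos).

Definition i0 : 'I_n := om kpos 0.
Definition i1 : 'I_n := nx i0.
Definition x0 : V := (false, i1).
Definition aa (t : 'I_3) : {set V} :=
  if t == K0 then ed (K1, i1) else if t == K1 then ed (K0, i1) else ed (K0, i0).

Lemma aa_E t : aa t \in E. Proof. by rewrite /aa; case: ifP => _; [|case: ifP => _]; apply: ed_E. Qed.
Lemma aa_x t : x0 \in aa t.
Proof.
rewrite /aa /x0; case: (ord3_cases t) => -> /=; rewrite mem_ed /at1 /at2 /at3 /= !xpair_eqE ?eqxx ?orbT //.
by rewrite /i1 pv_nx eqxx.
Qed.
Lemma aa_inj : injective aa.
Proof.
have h : forall t t', aa t = aa t' -> t = t'.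
  move=> t t'; rewrite /aa.
  case: (ord3_cases t) => ->; case: (ord3_cases t') => -> //= /ed_inj /eqP;
  by rewrite !xpair_eqE /= /i1 ?nxF ?nxF'.
exact: h.
Qed.
Lemma aa_x0 e : e \in E -> x0 \in e -> exists t, e = aa t.
Proof.
move=> /E_ed[d ->]; rewrite mem_ed /at1 /at2 /at3 /x0 /= => /or3P[] /eqP ->.
- by exists K2; rewrite /aa /= /i1 pv_nx.
- by exists K1.
- by exists K0.
Qed.

Definition ColGP := Col E aa.

Lemma count1 : #|[set F | ofact E F]| = #|ColGP|.
Proof. exact: count_ofact aa_E aa_x aa_inj aa_x0. Qed.

Definition third3 (a b : 'I_3) : 'I_3 := Ordinal (ltn_pmod (6 - (a + b)) (isT : 0 < 3)).

Lemma third_neq a b : a != b -> dist3 a b (third3 a b).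
Proof. by case: (ord3_cases a) => ->; case: (ord3_cases b) => ->. Qed.
Lemma third_uniq a b z : dist3 a b z -> z = third3 a b.
Proof.
move=> h; apply: val_inj; move: h.
by case: (ord3_cases a) => ->; case: (ord3_cases b) => ->; case: (ord3_cases z) => ->.
Qed.
Lemma tri_lemma (x y z t : 'I_3) : x != y -> z != x -> z != y -> t != x -> t != y -> z = t.
Proof.
by case: (ord3_cases x) => ->; case: (ord3_cases y) => ->; case: (ord3_cases z) => ->;
   case: (ord3_cases t) => ->.
Qed.

Section O.
Variable o : {ffun 'I_n -> 'I_3}.
Definition so i := third3 (o (pv i)) (o i).
Definition dc (d : 'I_3 * 'I_n) :=
  if d.1 == K0 then o d.2 else if d.1 == K1 then so d.2 else so (mk d.2).
Definition colo : {ffun {set V} -> 'I_3} :=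
  [ffun e => if [pick d | ed d == e] is Some d then dc d else K0].
Definition validO := [&& o i0 == K2, o i1 == K1, [forall i, o (pv i) != o i] &
   [forall i, dist3 (so i) (so (mk i)) (so (pk i))]].

Lemma colo_ed d : colo (ed d) = dc d.
Proof.
rewrite ffunE; case: pickP => [d' /eqP /ed_inj -> //|/(_ d)]; by rewrite eqxx.
Qed.
Lemma colo_nE e : e \notin E -> colo e = K0.
Proof.
move=> eE; rewrite ffunE; case: pickP => [d' /eqP ed'|//].
by move: eE; rewrite -ed' ed_E.
Qed.

Lemma colo_Col : validO -> colo \in ColGP.
Proof.
case/and4P => /eqP h0 /eqP h1 /forallP hpv /forallP hd.
rewrite inE; apply/and3P; split.
- by apply/forallP => e; apply/implyP => eE; rewrite colo_nE.
- apply/forallP => t; rewrite /aa; case: (ord3_cases t) => -> /=; rewrite colo_ed /dc /=.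
  + by rewrite /so /i1 pv_nx h0 h1.
  + by rewrite h1.
  + by rewrite h0.
rewrite proper_iff; apply/forallP => [[[] i]]; rewrite /at1 /at2 /at3 /= !colo_ed /dc /=.
  by rewrite mk_mk; apply: hd.
by apply: third_neq.
Qed.

Lemma oc_colo : [ffun i => colo (ed (K0, i))] = o.
Proof. by apply/ffunP => i; rewrite ffunE colo_ed. Qed.
End O.

Definition oc (c : {ffun {set V} -> 'I_3}) : {ffun 'I_n -> 'I_3} := [ffun i => c (ed (K0, i))].

Section C.
Variable c : {ffun {set V} -> 'I_3}.
Hypothesis cC : c \in ColGP.

Let c0 : forall e, e \notin E -> c e = K0.
Proof. by move: cC; rewrite inE => /and3P[/forallP h _ _] e eE; apply/eqP; apply: (implyP (h e)). Qed.
Let ca : forall t, c (aa t) = t.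
Proof. by move: cC; rewrite inE => /and3P[_ /forallP h _] t; apply/eqP. Qed.
Let cp : forall w, dist3 (c (ed (at1 w))) (c (ed (at2 w))) (c (ed (at3 w))).
Proof. by move: cC; rewrite inE => /and3P[_ _]; rewrite proper_iff => /forallP. Qed.

Lemma cK1 j : c (ed (K1, j)) = so (oc c) j.
Proof. rewrite /so !ffunE; apply: third_uniq; exact: (cp (false, j)). Qed.

Lemma cK2 j : c (ed (K2, j)) = c (ed (K1, mk j)).
Proof.
have h1 := cp (true, mk j); have h2 := cp (true, pk j); have h3 := cp (true, j).
move: h1 h2 h3; rewrite /at1 /at2 /at3 /= mk_mk mk_pk.
case/and3P => a1 a2 a3; case/and3P => b1 b2 b3; case/and3P => d1 d2 d3.
symmetry; apply: (tri_lemma a2) => //; by rewrite eq_sym.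
Qed.

Lemma colo_oc : colo (oc c) = c.
Proof.
apply/ffunP => e; case: (boolP (e \in E)) => eE; last by rewrite colo_nE // c0.
have [[t j] ->] := E_ed kpos eE; rewrite colo_ed /dc /=.
case: (ord3_cases t) => -> /=.
- by rewrite ffunE.
- by rewrite cK1.
- by rewrite cK2 cK1.
Qed.

Lemma oc_valid : validO (oc c).
Proof.
apply/and4P; split.
- by rewrite ffunE -(ca K2).
- by rewrite ffunE -(ca K1).
- apply/forallP => i; rewrite !ffunE; have := cp (false, i).
  by rewrite /at1 /at2 /at3 /= => /and3P[].
apply/forallP => i; rewrite -!cK1 -cK2.
have := cp (true, i); rewrite /at1 /at2 /at3 /=.
by rewrite (cK2 (mk i)) mk_mk.
Qed.
End C.

Lemma count2 : #|ColGP| = #|[set o | validO o]|.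
Proof.
have inj : {in ColGP &, injective oc}.
  by move=> c c' cC c'C e; rewrite -(colo_oc cC) -(colo_oc c'C) e.
rewrite -(card_in_imset inj); apply: eq_card => o; rewrite inE.
apply/imsetP/idP => [[c cC ->]|vo]; first exact: oc_valid.
by exists (colo o); [exact: colo_Col | rewrite /oc oc_colo].
Qed.

End GP3.

Section GP4.
Variable k' : nat.
Local Notation k := k'.+1.
Let kpos : 0 < k := ltn0Sn k'.
Local Notation n := (3 * k).
Local Notation om := (om kpos).
Local Notation nx := (nx kpos).
Local Notation pv := (pv kpos).
Local Notation pk := (pk kpos).
Local Notation mk := (mk kpos).
Local Notation validO := (validO kpos).
Local Notation so := (so kpos).

Definition enc (a b c : nat) : 'I_27 := inord (9 * a + 3 * b + c).

Lemma enc_val (a b c : 'I_3) : (enc a b c : nat) = 9 * a + 3 * b + c.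
Proof. move: (ltn_ord a) (ltn_ord b) (ltn_ord c) => ha hb hc; rewrite /enc inordK //; lia. Qed.
Lemma enc_c0 (a b c : 'I_3) : c0 (enc a b c) = a.
Proof. rewrite enc_val /c0; have := ltn_ord a; have := ltn_ord b; have := ltn_ord c; lia. Qed.
Lemma enc_c1 (a b c : 'I_3) : c1 (enc a b c) = b.
Proof. rewrite enc_val /c1; have := ltn_ord a; have := ltn_ord b; have := ltn_ord c; lia. Qed.
Lemma enc_c2 (a b c : 'I_3) : c2 (enc a b c) = c.
Proof. rewrite enc_val /c2; have := ltn_ord a; have := ltn_ord b; have := ltn_ord c; lia. Qed.
Lemma enc_dec (x : 'I_27) : enc (c0 x) (c1 x) (c2 x) = x.
Proof.
apply: val_inj; rewrite /= /enc /c0 /c1 /c2 inordK; have := ltn_ord x; lia.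
Qed.

Definition compn (x : nat) (m : nat) := if m == 0 then c0 x else if m == 1 then c1 x else c2 x.
Lemma compn_lt (x : 'I_27) m : compn x m < 3.
Proof. rewrite /compn /c0 /c1 /c2; have := ltn_ord x; case: ifP => _; [|case: ifP => _]; lia. Qed.

Definition wo (o : {ffun 'I_n -> 'I_3}) : {ffun 'I_k.+1 -> 'I_27} :=
  [ffun j : 'I_k.+1 => enc (o (om j)) (o (om (j + k))) (o (om (j + 2 * k)))].
Definition ow (w : {ffun 'I_k.+1 -> 'I_27}) : {ffun 'I_n -> 'I_3} :=
  [ffun i : 'I_n => Ordinal (compn_lt (w (inord (i %% k))) (i %/ k))].

Lemma om_val (i : 'I_n) : om i = i.
Proof. by apply: val_inj; rewrite /= modn_small. Qed.

Lemma ow_wo o : ow (wo o) = o.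
Proof.
apply/ffunP => i; apply: val_inj; rewrite ffunE /= ffunE.
have hi := ltn_ord i.
have hm : i %% k < k by rewrite ltn_mod.
have hd : i %/ k < 3 by rewrite ltn_divLR.
have ei := divn_eq i k.
rewrite inordK; last lia.
rewrite /compn.
move: (i %/ k) (i %% k) hm hd ei => q r hm hd ei.
case: q hd ei => [|[|[|q]]] //= _ ei; rewrite ?enc_c0 ?enc_c1 ?enc_c2;
 by congr (val (o _)); apply: val_inj; rewrite /= modn_small; lia.
Qed.

Lemma ow_om (w : {ffun 'I_k.+1 -> 'I_27}) x : (ow w (om x) : nat) = compn (w (inord ((x %% n) %% k))) ((x %% n) %/ k).
Proof. by rewrite ffunE. Qed.

Lemma divmod_k (j m : nat) : j < k -> (m * k + j) %/ k = m /\ (m * k + j) %% k = j.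
Proof. by move=> jk; rewrite divnMDl // divn_small // addn0 modnMDl modn_small. Qed.

Lemma wo_ow (w : {ffun 'I_k.+1 -> 'I_27}) : w ord_max = rotI (w ord0) -> wo (ow w) = w.
Proof.
move=> wcl; apply/ffunP => j; rewrite ffunE !ow_om.
have hj := ltn_ord j.
case: (ltnP j k) => jk.
  have a0 : j %% n = j by rewrite modn_small; lia.
  have a1 : (j + k) %% n = j + k by rewrite modn_small; lia.
  have a2 : (j + 2 * k) %% n = j + 2 * k by rewrite modn_small; lia.
  rewrite a0 a1 a2.
  have := divmod_k 0 jk; rewrite mul0n add0n => -[d0 m0].
  have := divmod_k 1 jk; rewrite mul1n addnC => -[d1 m1].
  have := divmod_k 2 jk; rewrite addnC => -[d2 m2].
  rewrite m0 d0 m1 d1 m2 d2 /compn /=.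
  have -> : inord j = j by apply: val_inj; rewrite /= inordK.
  exact: enc_dec.
have ej : j = ord_max by apply: val_inj => /=; lia.
rewrite ej /= wcl.
have e1 : k %% n = k by rewrite modn_small; lia.
have e2 : (k + k) %% n = 2 * k by rewrite modn_small; lia.
have e3 : (k + 2 * k) %% n = 0 by rewrite (_ : k + 2 * k = n) ?modnn //; lia.
rewrite e1 e2 e3 modnn mod0n div0n divnn kpos.
rewrite modnMl mulnK // /compn /=.
by have -> : (inord 0 : 'I_k.+1) = ord0 by apply: val_inj; rewrite /= inordK.
Qed.

Local Notation i0 := (i0 kpos).
Local Notation i1 := (i1 kpos).

Definition ph0 (t : nat) := om t.+1.
Definition ph1 (t : nat) := om (t.+1 + k).
Definition ph2 (t : nat) := om (t.+1 + 2 * k).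

Lemma pk_ph0 (t : 'I_k) : pk (ph0 t) = ph1 t.
Proof. by apply: val_inj; rewrite /= modnDml. Qed.
Lemma mk_ph0 (t : 'I_k) : mk (ph0 t) = ph2 t.
Proof. by apply: val_inj; rewrite /= modnDml. Qed.
Lemma pv_ph0 (t : 'I_k) : pv (ph0 t) = om t.
Proof.
apply: val_inj; rewrite /= modnDml.
by rewrite (_ : t.+1 + n.-1 = t + n) ?modnDr //; lia.
Qed.
Lemma pv_ph1 (t : 'I_k) : pv (ph1 t) = om (t + k).
Proof.
apply: val_inj; rewrite /= modnDml.
by rewrite (_ : t.+1 + k + n.-1 = t + k + n) ?modnDr //; lia.
Qed.
Lemma pv_ph2 (t : 'I_k) : pv (ph2 t) = om (t + 2 * k).
Proof.
apply: val_inj; rewrite /= modnDml.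
by rewrite (_ : t.+1 + 2 * k + n.-1 = t + 2 * k + n) ?modnDr //; lia.
Qed.

Lemma cover (i : 'I_n) : exists t : 'I_k, [\/ i = ph0 t, i = ph1 t | i = ph2 t].
Proof.
have hi := ltn_ord i.
have hm : i %% k < k by rewrite ltn_mod.
have hd : i %/ k < 3 by rewrite ltn_divLR.
have ei := divn_eq i k.
move: (i %/ k) (i %% k) hm hd ei => q r hm hd ei.
case: r hm ei => [|r] hm ei.
  exists ord_max; case: q hd ei => [|[|[|q]]] //= _ ei.
  - by constructor 3; apply: val_inj; rewrite /= (_ : k'.+1 + 2 * k = n) ?modnn; lia.
  - by constructor 1; apply: val_inj; rewrite /= modn_small; lia.
  - by constructor 2; apply: val_inj; rewrite /= modn_small; lia.
exists (Ordinal (ltnW hm)); case: q hd ei => [|[|[|q]]] //= _ ei.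
- by constructor 1; apply: val_inj; rewrite /= modn_small; lia.
- by constructor 2; apply: val_inj; rewrite /= modn_small; lia.
- by constructor 3; apply: val_inj; rewrite /= modn_small; lia.
Qed.

Definition Qo (o : {ffun 'I_n -> 'I_3}) i := o (pv i) != o i.
Definition Do (o : {ffun 'I_n -> 'I_3}) i := dist3 (so o i) (so o (mk i)) (so o (pk i)).

Lemma step_iff o (t : 'I_k) :
  rs (wo o (widen_ord (leqnSn k) t)) (wo o (lift ord0 t)) =
  [&& Qo o (ph0 t), Qo o (ph1 t), Qo o (ph2 t) & dist3 (so o (ph0 t)) (so o (ph1 t)) (so o (ph2 t))].
Proof.
rewrite /rs /rsn !ffunE !enc_c0 !enc_c1 !enc_c2 /Qo /so pv_ph0 pv_ph1 pv_ph2 /=.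
done.
Qed.

Lemma dist3_rot (a b c : 'I_3) : dist3 a b c = dist3 b c a.
Proof. by case: (ord3_cases a) => ->; case: (ord3_cases b) => ->; case: (ord3_cases c) => ->. Qed.
Lemma dist3_sw (a b c : 'I_3) : dist3 a b c = dist3 a c b.
Proof. by case: (ord3_cases a) => ->; case: (ord3_cases b) => ->; case: (ord3_cases c) => ->. Qed.

Lemma Do_ph o (t : 'I_k) : Do o (ph0 t) && Do o (ph1 t) && Do o (ph2 t) =
   dist3 (so o (ph0 t)) (so o (ph1 t)) (so o (ph2 t)).
Proof.
rewrite /Do -pk_ph0 -mk_ph0 pk_pk mk_pk mk_mk pk_mk.
move: (so o (ph0 t)) (so o (pk (ph0 t))) (so o (mk (ph0 t))) => a b c.
by case: (ord3_cases a) => ->; case: (ord3_cases b) => ->; case: (ord3_cases c) => ->.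
Qed.

Definition WS : {set {ffun 'I_k.+1 -> 'I_27}} :=
  [set w | [&& wstep rs w, w ord_max == rotI (w ord0), c0 (w ord0) == 2 &
               c0 (w (lift ord0 ord0)) == 1]].

Lemma wo_closed o : wo o ord_max = rotI (wo o ord0).
Proof.
rewrite /rotI /rotn !ffunE enc_c0 enc_c1 enc_c2 /enc /=.
have -> : om (k + 2 * k) = om 0 by apply: val_inj; rewrite /= mod0n (_ : k + 2 * k = n) ?modnn; lia.
by rewrite addnn -mul2n.
Qed.

Lemma valid_WS o : validO o = (wo o \in WS).
Proof.
rewrite inE wo_closed eqxx /= !ffunE !enc_c0 /validO.
have -> : om (lift ord0 (@ord0 k')) = i1 by apply: val_inj.
have -> : om (@ord0 k'.+1) = i0 by apply: val_inj.
have hW : wstep rs (wo o) = [forall i, o (pv i) != o i] &&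
    [forall i, dist3 (so o i) (so o (mk i)) (so o (pk i))].
  rewrite /wstep; apply/forallP/andP => [H|[/forallP hQ /forallP hD] t].
    split; apply/forallP => i; have [t] := cover i;
      have := H t; rewrite step_iff -Do_ph => /and4P[q0 q1 q2 /andP[/andP[d0 d1] d2]];
      by rewrite /Qo /Do in q0 q1 q2 d0 d1 d2; case=> ->.
  rewrite step_iff -Do_ph.
  have := hQ (ph0 t); have := hQ (ph1 t); have := hQ (ph2 t).
  have := hD (ph0 t); have := hD (ph1 t); have := hD (ph2 t).
  rewrite /Do /Qo => -> -> -> -> -> ->.
  done.
rewrite hW -[(o i0 : nat) == 2]/(o i0 == K2) -[(o i1 : nat) == 1]/(o i1 == K1).
by case: (o i0 == K2); case: (o i1 == K1); rewrite /= ?andbT ?andbF.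
Qed.

Lemma count3 : #|[set o | validO o]| = #|WS|.
Proof.
have inj : injective wo by move=> o o' e; rewrite -(ow_wo o) -(ow_wo o') e.
rewrite -(card_imset _ inj); apply: eq_card => w.
apply/imsetP/idP => [[o /[!inE] vo ->]|wW].
  by move: (valid_WS o); rewrite inE => <-.
have wcl : w ord_max = rotI (w ord0) by move: wW; rewrite inE => /and4P[_ /eqP].
exists (ow w); last by rewrite wo_ow.
by rewrite inE valid_WS wo_ow.
Qed.

Lemma count4 : #|WS| = Nf k.
Proof.
rewrite /Nf -sum1_card.
rewrite (partition_big (fun w : {ffun 'I_k.+1 -> 'I_27} => (w ord0, w (lift ord0 ord0))) xpredT) //=.
rewrite [RHS]pair_big /=; apply: eq_bigr => [[X0 X1]] _ /=.
case hc0 : (c0 X0 == 2); case hc1 : (c0 X1 == 1); rewrite /= ?andbF /=.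
  rewrite -card_walkset_front -sum1_card; apply: eq_bigl => w; rewrite !inE.
  apply/andP/andP => [[/and4P[st cl h0 h1] /eqP[e0 e1]]|[/and3P[/eqP e0 cl st] /eqP e1]].
    split; last by rewrite e1.
    by apply/and3P; split => //; [rewrite e0 | rewrite -e0].
  split; last by rewrite e0 e1.
  by apply/and4P; split => //; [rewrite e0 | rewrite e0 | rewrite e1].
all: rewrite big_pred0 // => w.
all: apply/negP; rewrite !inE => /andP[/and4P[_ _ h0 h1] /eqP[e0 e1]].
all: by move: hc0 hc1; rewrite -e0 -e1 h0 h1.
Qed.
End GP4.

Unset Implicit Arguments.

Theorem lemma4 (k : nat) (hk : 1 <= k) :
  num_one_factorisations k = t_walks k 1 + 3 * h_walks k 2.
Proof.
case: k hk => [//|k'] _.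
have kpos : 0 < k'.+1 := ltn0Sn k'.
have e1 : num_one_factorisations k'.+1 = #|[set F | ofact (gp_edges k'.+1) F]| by [].
rewrite e1 (count1 (ltn0Sn k')) count2 count3 count4 main_count //.
rewrite Tf_walks Hf_walks.
by [].
Qed.
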